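(* Let $G$ be a topological group, $\theta\in\mathrm{Aut}(G)$ an involution, $K:=G^\theta$, and let $(X,o)\supset (G/K,eK)$ be a pointed reflection space containing $G/K$. Let $\{g_i, i\in I\}$ be a generating system of the group $G$. Furthermore, let $T_i\in\mathrm{Trans}(X)|_{G/K}$, $i\in I$, be elements that act on $G/K$ via left multiplication with $g_i$: $T_i( hK)=(g_ih)K$ for all $i\in I$ and $h\in G$. Then the set $\{T_i, {}^{s_o}(T_i^{-1}) \}$ is a generating system of the group $\mathrm{Trans}(X)|_{G/K}$.
   Context: $G/K$ is a reflection space with reflection $(gK,hK)\mapsto \tau(g)\theta(h)K$, where $\tau(g)=g\theta(g)^{-1}$, and base point $o=eK$. A reflection space has continuous $(x,y)\mapsto x.y$ satisfying $x.x=x$, $x.(x.y)=y$, $x.(y.z)=(x.y).(x.z)$. For $x\in X$, $s_x:y\mapsto x.y$ is the elementary reflection, and $\mathrm{Trans}(X)|_{G/K}:=\langle s_{y}\circ s_o\mid y\in G/K\rangle\le\mathrm{Trans}(X)$ is the restricted group of transvections. ${}^hg$ denotes left conjugation $hgh^{-1}$. *)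

(* Defs.v *)
From HB Require Import structures.
From mathcomp Require Import all_boot.
From mathcomp Require Import boolp classical_sets topology.
Set Implicit Arguments. Unset Strict Implicit. Unset Printing Implicit Defensive.
Local Open Scope classical_set_scope.

Definition is_group {G : Type} (mul : G -> G -> G) (inv : G -> G) (e : G) :=
  [/\ forall x y z, mul x (mul y z) = mul (mul x y) z,
      forall x, mul e x = x /\ mul x e = x &
      forall x, mul (inv x) x = e /\ mul x (inv x) = e].

Definition is_topological_group {G : topologicalType}
  (mul : G -> G -> G) (inv : G -> G) (e : G) :=
  [/\ is_group mul inv e,
      continuous (fun p : G * G => mul p.1 p.2) & continuous inv].

Definition is_involutive_automorphism {G : topologicalType}
  (mul : G -> G -> G) (theta : G -> G) :=
  [/\ forall x y, theta (mul x y) = mul (theta x) (theta y),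
      continuous theta & forall x, theta (theta x) = x].

Inductive gen_subgroup {G : Type} (mul : G -> G -> G) (inv : G -> G) (e : G)
    (S : set G) : set G :=
  | gsg_one : gen_subgroup mul inv e S e
  | gsg_gen x : S x -> gen_subgroup mul inv e S x
  | gsg_mul x y : gen_subgroup mul inv e S x -> gen_subgroup mul inv e S y ->
      gen_subgroup mul inv e S (mul x y)
  | gsg_inv x : gen_subgroup mul inv e S x -> gen_subgroup mul inv e S (inv x).

Definition is_reflection_space {X : topologicalType} (dot : X -> X -> X) :=
  [/\ continuous (fun p : X * X => dot p.1 p.2),
      forall x, dot x x = x,
      forall x y, dot x (dot x y) = y &
      forall x y z, dot x (dot y z) = dot (dot x y) (dot x z)].

Definition is_inverse {X : Type} (f g : X -> X) :=
  (forall x, g (f x) = x) /\ (forall x, f (g x) = x).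

Inductive gen_group_maps {X : Type} (S : set (X -> X)) : set (X -> X) :=
  | ggm_id : gen_group_maps S id
  | ggm_gen f : S f -> gen_group_maps S f
  | ggm_comp f g : gen_group_maps S f -> gen_group_maps S g ->
      gen_group_maps S (f \o g)
  | ggm_inv f g : gen_group_maps S f -> is_inverse f g -> gen_group_maps S g.

(* The pointed reflection space (X, dot, o) contains (G/K, eK) with K = G^theta:
   pi : G -> X is the map g |-> gK, it identifies exactly the cosets of K,
   intertwines the reflection (gK,hK) |-> tau(g) theta(h) K, sends e to o,
   and G/K carries the subspace topology of X which equals the quotient
   topology induced by pi. *)
Definition contains_homogeneous_space {G X : topologicalType}
  (mul : G -> G -> G) (inv : G -> G) (e : G) (theta : G -> G)
  (dot : X -> X -> X) (o : X) (pi : G -> X) :=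
  [/\ forall g h, pi g = pi h <-> theta (mul (inv g) h) = mul (inv g) h,
      forall g h, dot (pi g) (pi h) = pi (mul (mul g (inv (theta g))) (theta h)),
      pi e = o &
      forall A : set X, A `<=` range pi ->
        ((exists U : set X, open U /\ A = U `&` range pi) <-> open (pi @^-1` A))].

(* Trans(X)|_{G/K} = < s_y o s_o | y in G/K >. *)
Definition restricted_trans {G X : Type} (dot : X -> X -> X) (o : X)
  (pi : G -> X) : set (X -> X) :=
  gen_group_maps [set f | exists h : G, f = dot (pi h) \o dot o].

(* Main.v *)
Require Import Defs.
From HB Require Import structures.
From mathcomp Require Import all_boot.
From mathcomp Require Import boolp classical_sets topology.
Local Open Scope classical_set_scope.

Definition is_auto {X : Type} (dot : X -> X -> X) (f : X -> X) :=
  forall x y, f (dot x y) = dot (f x) (f y).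

Lemma inv_auto {X : Type} (dot : X -> X -> X) f g :
  is_auto dot f -> is_inverse f g -> is_auto dot g.
Proof.
move=> Hf [Hgf Hfg] x y.
by rewrite -{1}(Hfg x) -{1}(Hfg y) -Hf Hgf.
Qed.

Lemma trans_auto_inv {X : topologicalType} (dot : X -> X -> X) (S : set (X -> X)) :
  is_reflection_space dot ->
  (forall f, S f -> is_auto dot f /\ exists g, is_inverse f g) ->
  forall f, gen_group_maps S f -> is_auto dot f /\ exists g, is_inverse f g.
Proof.
move=> [_ _ _ Hd] HS f; elim => {f}.
- by split => //; exists id.
- by move=> f /HS.
- move=> f g _ [Af [fi [Hf1 Hf2]]] _ [Ag [gi [Hg1 Hg2]]]; split.
    by move=> x y /=; rewrite Ag Af.
  exists (gi \o fi); split => x /=; first by rewrite Hf1 Hg1.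
  by rewrite Hg2 Hf2.
- move=> f g _ [Af _] Hi; split; first exact: inv_auto Af Hi.
  exists f; case: Hi => [H1 H2]; by split.
Qed.

Lemma rt_auto_inv {G : Type} {X : topologicalType} (dot : X -> X -> X) o (pi : G -> X) :
  is_reflection_space dot ->
  forall f, restricted_trans dot o pi f ->
  is_auto dot f /\ exists g, is_inverse f g.
Proof.
move=> Hr; apply: trans_auto_inv => //.
case: Hr => [_ _ Hinv Hd].
move=> f [h ->]; split.
  by move=> x y /=; rewrite (Hd o x y) (Hd (pi h) (dot o x) (dot o y)).
exists (dot o \o dot (pi h)); split => x /=; by rewrite !Hinv.
Qed.

Lemma dot_conj {X : topologicalType} (dot : X -> X -> X) f g x :
  is_reflection_space dot -> is_auto dot f -> is_inverse f g ->
  dot (f x) = f \o dot x \o g.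
Proof.
move=> _ Af [H1 H2]; apply: funext => z /=.
by rewrite Af H2.
Qed.

Lemma conj_so {G : Type} {X : topologicalType} (dot : X -> X -> X) o (pi : G -> X) :
  is_reflection_space dot ->
  forall f, restricted_trans dot o pi f ->
  restricted_trans dot o pi (dot o \o f \o dot o).
Proof.
move=> [_ _ Hinv _] f; elim => {f}.
- have -> : dot o \o id \o dot o = id by apply: funext => x /=; rewrite Hinv.
  exact: ggm_id.
- move=> f [h ->].
  apply: (@ggm_inv _ _ (dot (pi h) \o dot o)); first by apply: ggm_gen; exists h.
  by split => x /=; rewrite !Hinv.
- move=> f g _ Hf _ Hg.
  have -> : dot o \o (f \o g) \o dot o =
            (dot o \o f \o dot o) \o (dot o \o g \o dot o).
    by apply: funext => x /=; rewrite Hinv.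
  exact: ggm_comp.
- move=> f g _ Hf [H1 H2]; apply: (ggm_inv Hf).
  by split => x /=; rewrite Hinv ?H1 ?H2 Hinv.
Qed.

Theorem proposition4p1
  (G : topologicalType) (mul : G -> G -> G) (inv : G -> G) (e : G)
  (theta : G -> G)
  (X : topologicalType) (dot : X -> X -> X) (o : X) (pi : G -> X)
  (I : Type) (g : I -> G) (T : I -> X -> X) :
  is_topological_group mul inv e ->
  is_involutive_automorphism mul theta ->
  is_reflection_space dot ->
  contains_homogeneous_space mul inv e theta dot o pi ->
  gen_subgroup mul inv e (range g) = setT ->
  (forall i, restricted_trans dot o pi (T i)) ->
  (forall i h, T i (pi h) = pi (mul (g i) h)) ->
  gen_group_maps
    ([set f | exists i, f = T i] `|`
     [set f | exists i Tinv, is_inverse (T i) Tinv /\ f = dot o \o Tinv \o dot o])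
  = restricted_trans dot o pi.
Proof.
move=> [[Hass Hid Hinvg] _ _] _ Hr [_ _ Hpie _] Hgen HT HTg.
have Hr' := Hr; case: Hr' => [_ Hxx Hinv Hd].
set H := gen_group_maps _.
have Huniq : forall a b, mul a b = e -> b = inv a.
  move=> a b Hab; rewrite -[b](proj1 (Hid _)) -(proj1 (Hinvg a)) -Hass Hab.
  by rewrite (proj2 (Hid _)).
have Hinvinv : forall x, inv (inv x) = x.
  by move=> x; rewrite -(Huniq _ _ (proj1 (Hinvg x))).
have HinvM : forall x y, inv (mul x y) = mul (inv y) (inv x).
  move=> x y; apply/esym/Huniq.
  rewrite -Hass [mul y (mul _ _)]Hass (proj2 (Hinvg y)) (proj1 (Hid _)).
  by rewrite (proj2 (Hinvg x)).
have Hinve : inv e = e by rewrite -[inv e](proj2 (Hid _)) (proj1 (Hinvg e)).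
have HTi : forall i, exists Ti, is_inverse (T i) Ti /\ is_auto dot (T i)
    /\ is_auto dot Ti.
  move=> i; have [A [Ti Hi]] := @rt_auto_inv _ _ dot o pi Hr _ (HT i).
  by exists Ti; split => //; split => //; apply: inv_auto A Hi.
pose Q h := dot (pi h) \o dot o.
have key : forall k, (forall h, H (Q h) -> H (Q (mul k h))) /\
                     (forall h, H (Q h) -> H (Q (mul (inv k) h))).
  move=> k; have : gen_subgroup mul inv e (range g) k by rewrite Hgen.
  elim => {k}.
  - by split => h; rewrite ?Hinve (proj1 (Hid _)).
  - move=> _ [i _ <-].
    have [Ti [[H1 H2] [A1 A2]]] := HTi i.
    have HTH : H (T i) by apply: ggm_gen; left; exists i.
    have HTiH : H Ti by apply: (ggm_inv HTH).
    have HcH : H (dot o \o Ti \o dot o) by apply: ggm_gen; right; exists i, Ti.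
    have HcH' : H (dot o \o T i \o dot o).
      by apply: (ggm_inv HcH); split => x /=; rewrite Hinv ?H1 ?H2 Hinv.
    split => h Hh.
    + have -> : Q (mul (g i) h) = T i \o Q h \o (dot o \o Ti \o dot o).
        rewrite /Q -HTg (@dot_conj _ dot _ _ (pi h) Hr A1 (conj H1 H2)).
        by apply: funext => x /=; rewrite Hinv.
      by apply: ggm_comp; first apply: ggm_comp.
    + have Hp : pi (mul (inv (g i)) h) = Ti (pi h).
        have -> : pi h = T i (pi (mul (inv (g i)) h)).
          by rewrite HTg Hass (proj2 (Hinvg _)) (proj1 (Hid _)).
        by rewrite H1.
      have -> : Q (mul (inv (g i)) h) = Ti \o Q h \o (dot o \o T i \o dot o).
        rewrite /Q Hp (@dot_conj _ dot _ _ (pi h) Hr A2 (conj H2 H1)).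
        by apply: funext => x /=; rewrite Hinv.
      by apply: ggm_comp; first apply: ggm_comp.
  - move=> x y _ [Ix1 Ix2] _ [Iy1 Iy2]; split => h Hh.
      by rewrite -Hass; apply: Ix1; apply: Iy1.
    by rewrite HinvM -Hass; apply: Iy2; apply: Ix2.
  - move=> x _ [I1 I2]; split => h Hh; first exact: I2.
    by rewrite Hinvinv; apply: I1.
have HQ : forall h, H (Q h).
  move=> h; rewrite -[h](proj2 (Hid _)); apply: (proj1 (key h)).
  have -> : Q e = id by apply: funext => x; rewrite /Q /= Hpie Hinv.
  exact: ggm_id.
apply/seteqP; split => f.
- elim => {f}.
  + exact: ggm_id.
  + move=> f [[i ->] | [i [Ti [Hi ->]]]]; first exact: HT.
    apply: conj_so => //; exact: (ggm_inv (HT i) Hi).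
  + by move=> f g' _ ? _ ?; apply: ggm_comp.
  + by move=> f g' _ ? Hi; apply: ggm_inv Hi.
- elim => {f}.
  + exact: ggm_id.
  + by move=> f [h ->]; apply: HQ.
  + by move=> f g' _ ? _ ?; apply: ggm_comp.
  + by move=> f g' _ ? Hi; apply: ggm_inv Hi.
Qed.
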